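(* Let $p \in (0,\frac{1}{2})$ be a constant. No (possibly randomized) sorting algorithm can achieve, on a random instance with $n$ elements, an expected total dislocation of $o(n)$.
   Context: Setting: the elements are $S=\{1,\dots,n\}$ with the natural order. A random instance consists of an input permutation of $S$ chosen uniformly at random together with comparison outcomes: for each pair $i<j$ independently, the comparison reports the wrong order with probability exactly $p$ and the correct order otherwise; outcomes are persistent (repeated comparisons of the same pair return the same outcome). The algorithm accesses elements only via these comparisons and outputs a permutation of $S$. The dislocation of an element is the absolute difference between its position in the output and its true rank; the total dislocation is the sum over all elements. *)

(* Defs.v *)
From HB Require Import structures.
From mathcomp Require Import all_boot all_order all_algebra all_fingroup.
From mathcomp Require Import reals.
Set Implicit Arguments. Unset Strict Implicit. Unset Printing Implicit Defensive.
Import Order.TTheory GRing.Theory Num.Theory.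
Local Open Scope ring_scope.

(* Elements are 'I_n = {0,...,n-1} with the natural order (the paper's
   {1,...,n} shifted by one; dislocations are unaffected). *)

(* Pairs (i,j) of elements with i < j: one comparison coin per such pair. *)
Definition pairs (n : nat) : {set 'I_n * 'I_n} :=
  [set x : 'I_n * 'I_n | (x.1 < x.2)%N].

(* Outcome "a is reported smaller than b" when F (a subset of [pairs n]) is the
   set of pairs whose comparison is reported in the wrong order.  Persistent:
   the outcome is a fixed function of the pair. *)
Definition reported_less (n : nat) (F : {set 'I_n * 'I_n}) (a b : 'I_n) : bool :=
  if (a < b)%N then (a, b) \notin F
  else if (b < a)%N then (b, a) \in F
  else false.

(* The input permutation sigma puts element [sigma k] at input position k.
   An algorithm only sees positions; the information available to it through
   comparisons is the reported order relation between positions. *)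
Definition observation (n : nat) (sigma : 'S_n) (F : {set 'I_n * 'I_n})
  : {ffun 'I_n * 'I_n -> bool} :=
  [ffun x : 'I_n * 'I_n => reported_less F (sigma x.1) (sigma x.2)].

(* Output tau : output rank k holds the element at input position tau k, i.e.
   element sigma (tau k).  Its dislocation is |k - sigma (tau k)|. *)
Definition total_dislocation (R : numDomainType) (n : nat) (sigma tau : 'S_n) : R :=
  \sum_(k < n) `| (k : nat)%:R - (sigma (tau k) : nat)%:R |.

(* A (possibly randomized) comparison-based sorting algorithm on n elements:
   given everything it can learn by comparisons (it may query every pair, as
   there is no query cost), it outputs a permutation according to a probability
   distribution (its internal randomness). *)
Definition randomized_algorithm (R : numDomainType) (n : nat) :=
  {ffun 'I_n * 'I_n -> bool} -> {ffun 'S_n -> R}.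

Definition valid_algorithm (R : numDomainType) (n : nat)
  (A : randomized_algorithm R n) : Prop :=
  forall o : {ffun 'I_n * 'I_n -> bool},
    (forall tau, 0 <= A o tau) /\ \sum_(tau : 'S_n) A o tau = 1.

Definition expected_dislocation (R : numDomainType) (p : R) (n : nat)
  (A : randomized_algorithm R n) : R :=
  \sum_(sigma : 'S_n) \sum_(F : {set 'I_n * 'I_n} | F \subset pairs n)
    ((n`!)%:R)^-1 * (p ^+ #|F| * (1 - p) ^+ (#|pairs n| - #|F|)) *
    \sum_(tau : 'S_n) A (observation sigma F) tau * total_dislocation R sigma tau.

(* Main.v *)
Require Import Defs.
From HB Require Import structures.
From mathcomp Require Import all_boot all_order all_algebra all_fingroup.
From mathcomp Require Import reals zify ring lra.
Set Implicit Arguments. Unset Strict Implicit. Unset Printing Implicit Defensive.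
Import Order.TTheory GRing.Theory Num.Theory.

Ltac ord2nat := repeat match goal with
 | H : @eq ?T ?a ?b |- _ =>
     lazymatch T with nat => fail | bool => fail | _ => idtac end;
     let H2 := fresh "He" in
     (have H2 : (nat_of_ord a = nat_of_ord b) by rewrite H);
     clear H
 | H : ~ (@eq ?T ?a ?b) |- _ =>
     lazymatch T with nat => fail | bool => fail | _ => idtac end;
     let H' := fresh "Hn" in
     (have H' : (nat_of_ord a <> nat_of_ord b) by (move=> /val_inj; exact: H));
     clear H
 end.

Section Inv.
Variables (n : nat) (i j : 'I_n).
Hypothesis hij : (j : nat) = i.+1.
Local Notation t := (tperm i j).

Lemma ij_neq : i != j.
Proof. apply/eqP => /(congr1 val) /=; lia. Qed.

Lemma t_eq_i u : (t u == i) = (u == j).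
Proof. by rewrite -[X in _ == X](tpermR i j) (inj_eq perm_inj). Qed.
Lemma t_eq_j u : (t u == j) = (u == i).
Proof. by rewrite -[X in _ == X](tpermL i j) (inj_eq perm_inj). Qed.

Lemma t_lt (u v : 'I_n) : (u < v)%N -> ~~ ((u == i) && (v == j)) ->
  (t u < t v)%N.
Proof.
move=> huv /nandP [/eqP H|/eqP H];
case: (tpermP i j u) => [hu|hu|hu1 hu2]; case: (tpermP i j v) => [hv|hv|hv1 hv2];
  ord2nat; lia.
Qed.

Definition kmap (x : 'I_n * 'I_n) : 'I_n * 'I_n :=
  if (x == (i,j)) || (x == (j,i)) then x else (t x.1, t x.2).
Definition phi (F : {set 'I_n * 'I_n}) : {set 'I_n * 'I_n} :=
  [set x | (kmap x \in F) (+) (x == (i,j))].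

Lemma kmapK : involutive kmap.
Proof.
case=> a b; rewrite {2}/kmap; case: ifP => H; first by rewrite /kmap H.
rewrite /kmap !xpair_eqE /= !t_eq_i !t_eq_j; rewrite !xpair_eqE in H.
by rewrite orbC H !tpermK.
Qed.

Lemma kmap_e x : (kmap x == (i,j)) = (x == (i,j)).
Proof.
case: x => a b; rewrite /kmap; case: ifP => // H; move: H.
rewrite !xpair_eqE /= !t_eq_i !t_eq_j.
by case: (a == i); case: (b == j); case: (a == j); case: (b == i).
Qed.

Lemma phiK : involutive phi.
Proof.
move=> F; apply/setP => x; rewrite !inE kmapK kmap_e.
by case: (x \in F); case: (x == (i,j)).
Qed.

Lemma e_pairs : (i,j) \in pairs n.
Proof. by rewrite inE /= hij. Qed.

Lemma kmap_pairs x : x \in pairs n -> kmap x \in pairs n.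
Proof.
case: x => a b; rewrite /kmap !inE /=; case: ifP => // H hab.
apply: t_lt => //; move: H; rewrite !xpair_eqE; by case: (_ && _).
Qed.

Lemma phi_sub1 (F : {set 'I_n * 'I_n}) : F \subset pairs n -> phi F \subset pairs n.
Proof.
move=> /subsetP HF; apply/subsetP => x; rewrite inE.
case: eqP => [-> _|_]; first exact: e_pairs.
by rewrite addbF => /HF /kmap_pairs; rewrite kmapK.
Qed.

Lemma phi_sub (F : {set 'I_n * 'I_n}) : (phi F \subset pairs n) = (F \subset pairs n).
Proof.
apply/idP/idP; last exact: phi_sub1.
by move=> /phi_sub1; rewrite phiK.
Qed.

Lemma phi_e (F : {set 'I_n * 'I_n}) : ((i,j) \in phi F) = ((i,j) \notin F).
Proof. by rewrite inE eqxx /kmap eqxx /= addbT. Qed.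

Lemma phi_D1 F : phi F :\ (i,j) = kmap @: (F :\ (i,j)).
Proof.
rewrite (can2_imset_pre _ kmapK kmapK); apply/setP => x.
rewrite !inE kmap_e.
by case: (x == (i,j)); rewrite ?addbF.
Qed.

Lemma card_phi (F : {set 'I_n * 'I_n}) : #|phi F :\ (i,j)| = #|F :\ (i,j)|.
Proof. by rewrite phi_D1 card_imset //; exact: (can_inj kmapK). Qed.

Lemma t_ltE u v : ~~((u == i) && (v == j)) -> ~~((u == j) && (v == i)) ->
  (t u < t v)%N = (u < v)%N.
Proof.
move=> h1 h2; apply/idP/idP; last by move=> h; apply: t_lt.
move=> h; rewrite -(tpermK i j u) -(tpermK i j v); apply: t_lt => //.
by rewrite t_eq_i t_eq_j.
Qed.

Lemma kmap_t u v : ~~((u == i) && (v == j)) -> ~~((u == j) && (v == i)) ->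
  kmap (t u, t v) = (u, v).
Proof.
move=> h1 h2; rewrite /kmap !xpair_eqE /= !t_eq_i !t_eq_j.
by rewrite (negbTE h1) (negbTE h2) !tpermK.
Qed.

Lemma mem_phi_t (F : {set 'I_n * 'I_n}) u v : ~~((u == i) && (v == j)) -> ~~((u == j) && (v == i)) ->
  ((t u, t v) \in phi F) = ((u, v) \in F).
Proof.
move=> h1 h2; rewrite inE kmap_t // xpair_eqE t_eq_i t_eq_j.
by rewrite (negbTE h2) addbF.
Qed.

Lemma rl_phi (F : {set 'I_n * 'I_n}) u v : reported_less (phi F) (t u) (t v) = reported_less F u v.
Proof.
rewrite /reported_less.
case E1: ((u == i) && (v == j)).
  move/andP: E1 => [/eqP-> /eqP->]; rewrite tpermL tpermR hij ltnSn.
  by rewrite ltnNge leqnSn /= phi_e.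
case E2: ((u == j) && (v == i)).
  move/andP: E2 => [/eqP-> /eqP->]; rewrite tpermL tpermR hij ltnSn.
  by rewrite ltnNge leqnSn /= phi_e negbK.
have E1' : ~~ ((v == i) && (u == j)) by rewrite andbC E2.
have E2' : ~~ ((v == j) && (u == i)) by rewrite andbC E1.
rewrite !t_ltE ?E1 ?E2 //.
by rewrite !mem_phi_t ?E1 ?E2.
Qed.

Lemma obs_phi (s : 'S_n) (F : {set 'I_n * 'I_n}) :
  observation (s * t) (phi F) = observation s F.
Proof. by apply/ffunP => x; rewrite !ffunE !permM rl_phi. Qed.

End Inv.

Section Real.
Local Open Scope ring_scope.
Variable R : realType.
Variable p : R.
Hypothesis hp0 : 0 <= p.
Hypothesis hp1 : p <= 1 - p.
Local Open Scope ring_scope.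

Definition wt n (F : {set 'I_n * 'I_n}) : R :=
  p ^+ #|F| * (1 - p) ^+ (#|pairs n| - #|F|).

Lemma p_le1 : p <= 1.
Proof. have h0 := hp0; have h1 := hp1; lra. Qed.

Lemma wt_ge0 n F : 0 <= wt (n:=n) F.
Proof. by rewrite /wt mulr_ge0 // exprn_ge0 // subr_ge0 p_le1. Qed.

Lemma weight_split n (i j : 'I_n) (hij : (j:nat) = i.+1) (G : {set 'I_n * 'I_n}) :
  G \subset pairs n ->
  wt G = p ^+ #|G :\ (i,j)| * (1 - p) ^+ (#|pairs n :\ (i,j)| - #|G :\ (i,j)|)
         * (if (i,j) \in G then p else 1 - p).
Proof.
move=> HG.
have hG := cardsD1 (i,j) G.
have hP := cardsD1 (i,j) (pairs n); rewrite e_pairs // in hP.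
have ha : (#|G :\ (i,j)| <= #|pairs n :\ (i,j)|)%N.
  by apply: subset_leq_card; apply: setSD.
rewrite /wt hG hP.
case: ((i,j) \in G) => /=.
  have -> : (1 + #|pairs n :\ (i, j)| - (1 + #|G :\ (i, j)|) =
             #|pairs n :\ (i, j)| - #|G :\ (i, j)|)%N by lia.
  by rewrite add1n exprS; ring.
have -> : (1 + #|pairs n :\ (i, j)| - (0 + #|G :\ (i, j)|) =
           (#|pairs n :\ (i, j)| - #|G :\ (i, j)|).+1)%N by lia.
by rewrite add0n exprS; ring.
Qed.

Lemma wt_phi n (i j : 'I_n) (hij : (j:nat) = i.+1) (F : {set 'I_n * 'I_n}) :
  F \subset pairs n -> p * wt F <= wt (phi i j F).
Proof.
move=> HF.
have HF' : phi i j F \subset pairs n by rewrite phi_sub.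
rewrite (weight_split hij HF) (weight_split hij HF') card_phi // phi_e //.
have hB : forall k l, 0 <= p ^+ k * (1 - p) ^+ l.
  by move=> k l; rewrite mulr_ge0 // exprn_ge0 // subr_ge0 p_le1.
have := hB (#|F :\ (i,j)|) (#|pairs n :\ (i,j)| - #|F :\ (i,j)|)%N.
move: (p ^+ _ * (1 - p) ^+ _) => B hB0.
have h0 := hp0; have h1 := hp1; have hq : 0 <= 1 - p by lra.
have hBp := mulr_ge0 hB0 h0; clear hB.
case: ((i,j) \in F) => /=; nra.
Qed.

Lemma sum_wt n : \sum_(F : {set 'I_n * 'I_n} | F \subset pairs n) wt F = 1.
Proof.
pose f (x : 'I_n * 'I_n) : R := if x \in pairs n then p else 0.
pose g (x : 'I_n * 'I_n) : R := if x \in pairs n then 1 - p else 1.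
have H := @bigA_distr R 0 1 *%R +%R _ f g.
rewrite big1 in H; last first.
  move=> x _; rewrite /f /g; case: ifP => _.
    by change (p + (1 - p) = 1); rewrite addrCA subrr addr0.
  by change (0 + 1 = 1 :> R); rewrite add0r.
rewrite [RHS]H big_mkcond /=.
apply: eq_big => [J|J _]; first by [].
case: (boolP (J \subset pairs n)) => HJ.
  rewrite (eq_bigr (fun x => (if x \in J then p else 1) *
                       (if x \in pairs n :\: J then 1 - p else 1))); last first.
    move=> x _; rewrite /f /g in_setD.
    case: (boolP (x \in J)) => xJ /=.
      by rewrite (subsetP HJ x xJ) mulr1.
    by case: (x \in pairs n); rewrite mul1r.
  rewrite big_split /= -!big_mkcond /= !prodr_const cardsD (setIidPr HJ).
  by [].
move/subsetPn: HJ => [x xJ xP].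
by rewrite (bigD1 x) //= xJ /f (negbTE xP) mul0r.
Qed.


Definition Y n (v : 'I_n) (s tau : 'S_n) : R :=
  `| ((((tau * s)^-1)%g v : 'I_n) : nat)%:R - (v : nat)%:R |.

Lemma Y_ge0 n (v : 'I_n) s tau : 0 <= Y v s tau.
Proof. exact: normr_ge0. Qed.

Lemma disl_Y n (s tau : 'S_n) :
  total_dislocation R s tau = \sum_(v < n) Y v s tau.
Proof.
rewrite /total_dislocation (reindex_inj (@perm_inj _ ((tau * s)^-1)%g)) /=.
apply: eq_bigr => v _; rewrite /Y.
by rewrite -permM permKV.
Qed.

Lemma dist1 (a b : nat) : a <> b -> 1 <= `|a%:R - b%:R : R|.
Proof.
move=> hab; case: (ltngtP a b) => h.
- rewrite distrC -natrB ?(ltnW h) // normr_nat ler1n subn_gt0 //.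
- rewrite -natrB ?(ltnW h) // normr_nat ler1n subn_gt0 //.
- by [].
Qed.

Lemma Y_pair n (v w : 'I_n) (hvw : (w:nat) = v.+1) s tau :
  1 <= Y v s tau + Y v (s * tperm v w)%g tau.
Proof.
have E : ((tau * (s * tperm v w))^-1)%g v = ((tau * s)^-1)%g w.
  by rewrite mulgA invMg permM tpermV tpermL.
rewrite /Y E.
set a := ((tau * s)^-1)%g v; set b := ((tau * s)^-1)%g w.
have hab : (a : nat) <> b.
  move=> /val_inj /perm_inj /(congr1 val) /=; lia.
case: (eqVneq (a : nat) v) => ha.
  have := @dist1 (b : nat) v; rewrite -ha => /(_ (nesym hab)) h.
  by rewrite ha subrr normr0 add0r -ha.
have := @dist1 (a : nat) v => /(_ (elimN eqP ha)) h.
by apply: (le_trans h); rewrite lerDl normr_ge0.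
Qed.

Definition Sv n (A : randomized_algorithm R n) (v : 'I_n) : R :=
  \sum_(s : 'S_n) \sum_(F : {set 'I_n * 'I_n} | F \subset pairs n)
    ((n`!)%:R)^-1 * wt F * \sum_(tau : 'S_n) A (observation s F) tau * Y v s tau.

Lemma Sv_ge0 n (A : randomized_algorithm R n) (hA : valid_algorithm A) v :
  0 <= Sv A v.
Proof.
apply: sumr_ge0 => s _; apply: sumr_ge0 => F _.
apply: mulr_ge0; first by apply: mulr_ge0; [rewrite invr_ge0 ler0n | exact: wt_ge0].
apply: sumr_ge0 => tau _; rewrite mulr_ge0 ?Y_ge0 //.
by case: (hA (observation s F)).
Qed.

Lemma ED_eq n (A : randomized_algorithm R n) :
  expected_dislocation p A = \sum_(v < n) Sv A v.
Proof.
rewrite /expected_dislocation /Sv [RHS]exchange_big /=.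
apply: eq_bigr => s _; rewrite [RHS]exchange_big /=.
apply: eq_bigr => F _.
rewrite -big_distrr /= [in RHS]exchange_big /=.
rewrite /wt; congr (_ * _); apply: eq_bigr => tau _.
by rewrite disl_Y big_distrr.
Qed.

Lemma Sv_bound n (A : randomized_algorithm R n) (hA : valid_algorithm A)
  (v w : 'I_n) (hvw : (w:nat) = v.+1) : p <= Sv A v + Sv A v.
Proof.
set c : R := ((n`!)%:R)^-1.
have hc : 0 <= c by rewrite invr_ge0 ler0n.
have HS' : Sv A v = \sum_(s : 'S_n) \sum_(F : {set 'I_n * 'I_n} | F \subset pairs n)
    c * wt (phi v w F) * \sum_(tau : 'S_n) A (observation s F) tau *
      Y v (s * tperm v w)%g tau.
  rewrite /Sv (reindex_inj (@mulIg _ (tperm v w))) /=.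
  apply: eq_bigr => s _.
  rewrite (reindex_inj (can_inj (@phiK _ v w))) /=.
  apply: eq_big => [F|F _]; first by rewrite phi_sub.
  by rewrite obs_phi.
have H : \sum_(s : 'S_n) \sum_(F : {set 'I_n * 'I_n} | F \subset pairs n)
    c * p * wt F <= Sv A v + Sv A v.
  rewrite {2}HS' /Sv -big_split /=; apply: ler_sum => s _.
  rewrite -big_split /=; apply: ler_sum => F HF.
  have [hA0 hA1] := hA (observation s F).
  set X := \sum_tau _ * Y v s tau.
  set X' := \sum_tau _ * Y v (s * tperm v w)%g tau.
  have hX : 0 <= X by apply: sumr_ge0 => tau _; rewrite mulr_ge0 ?Y_ge0.
  have hX' : 0 <= X' by apply: sumr_ge0 => tau _; rewrite mulr_ge0 ?Y_ge0.
  have hXX : 1 <= X + X'.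
    rewrite -big_split /= -hA1; apply: ler_sum => tau _.
    rewrite -mulrDr -[X in X <= _]mulr1; apply: ler_wpM2l => //.
    exact: Y_pair.
  have hw := wt_ge0 F; have hwp := wt_phi hvw HF.
  move: hw hwp; set W := wt F; set W' := wt (phi v w F) => hw hwp.
  have h0 := hp0; have h1 := hp1.
  have hWp : 0 <= W - p * W.
    by rewrite -{1}[W]mul1r -mulrBl mulr_ge0 // subr_ge0 p_le1.
  have e1 : 0 <= c * (W - p * W) * X by apply: mulr_ge0 => //; apply: mulr_ge0.
  have e2 : 0 <= c * (W' - p * W) * X'.
    by apply: mulr_ge0 => //; apply: mulr_ge0 => //; rewrite subr_ge0.
  have e3 : 0 <= c * (p * W) * (X + X' - 1).
    apply: mulr_ge0; last by rewrite subr_ge0.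
    by apply: mulr_ge0 => //; apply: mulr_ge0.
  rewrite -/c; nra.
apply: le_trans H.
under eq_bigr do rewrite -big_distrr /= sum_wt mulr1.
rewrite sumr_const card_Sn -mulr_natr mulrAC /c mulVf ?mul1r //.
by rewrite pnatr_eq0 -lt0n fact_gt0.
Qed.

End Real.

Unset Implicit Arguments.
Set Strict Implicit.
Local Open Scope ring_scope.
Theorem theorem6p3 (R : realType) (p : R) (hp0 : 0 < p) (hp1 : p < 2^-1)
  (A : forall n : nat, randomized_algorithm R n)
  (hA : forall n : nat, valid_algorithm (A n)) :
  ~ (forall eps : R, 0 < eps ->
       exists N : nat, forall n : nat, (N <= n)%N ->
         expected_dislocation p (A n) <= eps * n%:R).
Proof.
move=> H.
have hp0' : 0 <= p by exact: ltW.
have hp1' : p <= 1 - p by lra.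
have [N HN] : exists N : nat, forall n : nat, (N <= n)%N -> expected_dislocation p (A n) <= p / 4 * n%:R.
  by apply: H; rewrite divr_gt0.
set m := (N + 2)%N.
have hm : (N <= m.+1)%N by rewrite /m; lia.
have := HN _ hm.
rewrite ED_eq big_ord_recr /=.
set T := \sum_(v < m) _.
have Hlow : p *+ m <= T + T.
  rewrite /T -big_split /= -[X in _ *+ X](card_ord m) -sumr_const.
  apply: ler_sum => v _.
  exact: (Sv_bound hp0' hp1' (hA _) (w := @Ordinal m.+1 v.+1 (ltn_ord v))).
have hS := Sv_ge0 hp0' hp1' (hA m.+1) ord_max.
have hM : 2 <= m%:R :> R by rewrite ler_nat /m; lia.
rewrite -mulr_natr in Hlow.
move: hS; move: (Sv p (A m.+1) ord_max) => S hS.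
have hm1 : (m.+1%:R : R) = m%:R + 1 by rewrite -addn1 natrD.
rewrite hm1; move: Hlow hM; move: (m%:R : R) => M Hlow hM Hup.
have h4 : p / 4 * (M + 1) = p * (M + 1) / 4 by rewrite mulrAC.
rewrite h4 in Hup.
have hp := hp0.
nra.
Qed.
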